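(* Let $G$ be a groupoid object in a tangent category $\mathcal C$ and $r:E\to G_0$ a differentiable right $G$-bundle. Then for every $n\ge0$ the higher vertical tangent bundle $r_{V^{[n]}E}:V^{[n]}E\to G_0$ together with the morphism $\beta_{V^{[n]}E}$ is a right $G$-bundle.
   Context: Tangent category (Rosický, with negatives): a category with an endofunctor $T$ and natural transformations $\pi:T\Rightarrow\mathrm{id}$, $0:\mathrm{id}\Rightarrow T$, $+$, $\lambda$, $\tau$ satisfying Rosický's axioms; in particular $\pi\circ0=\mathrm{id}$. Write $0^{[n]}_X=T^{n-1}0_X\circ\cdots\circ T0_X\circ0_X:X\to T^nX$ (iterated zero section, $0^{[0]}_X=\mathrm{id}$) and $0_{(m),X}=(0_X,\dots,0_X):X\to T_mX$, where $T_mX$ is the $m$-fold fiber product of $\pi_X$. Groupoid object $G=(G_0,G_1,s,t,1,i,m)$ with iterated fiber products $G_k$ of composable arrows existing and usual axioms; $t_k=t\circ\mathrm{pr}_1$, $t_0=\mathrm{id}$. $G$ is differentiable if for all $n\ge1,m\ge2,k\ge0$ the pullbacks $T^nG_1\times^{T^ns,T^nt_k}_{T^nG_0}T^nG_k$, $T^nG_1\times^{T^ns,0^{[n]}_{G_0}\circ t_k}_{T^nG_0}G_k$, $T_mG_1\times^{T_ms,0_{(m),G_0}\circ t_k}_{T_mG_0}G_k$, $G_0\times^{1,\pi_{G_1}\circ\mathrm{pr}_1}_{G_1}(TG_1\times^{Ts,0_{G_0}}_{TG_0}G_0)$ exist and $T^n(G_1\times^{s,t_k}_{G_0}G_k)\to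 T^nG_1\times_{T^nG_0}T^nG_k$ is an isomorphism. (Then $T^nG$ with the tangent structure maps is again a groupoid object.) Right $G$-bundle: $r:E\to G_0$ with $E\times^{r,t_k}_{G_0}G_k$ existing, and $\beta_E:E\times^{r,t}_{G_0}G_1\to E$ with $r\circ\beta_E=s\circ\mathrm{pr}_2$, unital, associative. Differentiable: $G$ differentiable, for all $n\ge1,m\ge2,k\ge0$ the pullbacks $T^nE\times^{T^nr,T^nt_k}_{T^nG_0}T^nG_k$, $T^nE\times^{T^nr,0^{[n]}_{G_0}\circ t_k}_{T^nG_0}G_k$, $T_mE\times^{T_mr,0_{(m),G_0}\circ t_k}_{T_mG_0}G_k$ exist and $\nu_{n,k}:T^n(E\times^{r,t_k}_{G_0}G_k)\to T^nE\times_{T^nG_0}T^nG_k$ is an isomorphism. Then $\beta_{T^nE}=T^n\beta_E\circ\nu_{n,1}^{-1}$ is a $T^nG$-action on $T^nr:T^nE\to T^nG_0$. $V^{[n]}E=T^nE\times^{T^nr,0^{[n]}_{G_0}}_{T^nG_0}G_0$ with projections $i_{V^{[n]}E}:V^{[n]}E\to T^nE$ and $r_{V^{[n]}E}:V^{[n]}E\to G_0$. By differentiability $V^{[n]}E\times_{G_0}G_k\cong T^nE\times^{T^nr,0^{[n]}_{G_0}\circ t_k}_{T^nG_0}G_k$ exists, and $\beta_{V^{[n]}E}:V^{[n]}E\times^{r_{V^{[n]}E},t}_{G_0}G_1\to V^{[n]}E$ is the morphism induced by the universal property of $V^{[n]}E$, i.e. the unique one with $i_{V^{[n]}E}\circ\beta_{V^{[n]}E}=\beta_{T^nE}\circ(i_{V^{[n]}E}\times_{0^{[n]}_{G_0}}0^{[n]}_{G_1})$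 and $r_{V^{[n]}E}\circ\beta_{V^{[n]}E}=s\circ\mathrm{pr}_2$. *)

(* Defs.v *)
(* Equality of morphisms is Leibniz. *)
From Stdlib Require Import Arith.

Record Category := {
  Ob :> Type;
  Hom : Ob -> Ob -> Type;
  idm : forall A, Hom A A;
  comp : forall A B D, Hom B D -> Hom A B -> Hom A D;
  comp_idl : forall A B (f : Hom A B), comp A B B (idm B) f = f;
  comp_idr : forall A B (f : Hom A B), comp A A B f (idm A) = f;
  comp_assoc : forall A B D F (h : Hom D F) (g : Hom B D) (f : Hom A B),
      comp A D F h (comp A B D g f) = comp A B F (comp B D F h g) f
}.
Arguments Hom {c} _ _.
Arguments idm {c} _.
Arguments comp {c A B D} _ _.
Notation "g ∘ f" := (comp g f) (at level 40, left associativity).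

Definition is_iso {C : Category} {A B : C} (f : Hom A B) : Prop :=
  exists g : Hom B A, g ∘ f = idm A /\ f ∘ g = idm B.

Definition is_pullback {C : Category} {A B D P : C}
    (p1 : Hom P A) (p2 : Hom P B) (f : Hom A D) (g : Hom B D) : Prop :=
  f ∘ p1 = g ∘ p2 /\
  forall (X : C) (x1 : Hom X A) (x2 : Hom X B), f ∘ x1 = g ∘ x2 ->
    exists u : Hom X P, p1 ∘ u = x1 /\ p2 ∘ u = x2 /\
      forall v : Hom X P, p1 ∘ v = x1 -> p2 ∘ v = x2 -> v = u.

Definition has_pullback {C : Category} {A B D : C}
    (f : Hom A D) (g : Hom B D) : Prop :=
  exists (P : C) (p1 : Hom P A) (p2 : Hom P B), is_pullback p1 p2 f g.

Definition is_fiber_power {C : Category} (m : nat) {A D P : C}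
    (p : nat -> Hom P A) (f : Hom A D) : Prop :=
  (forall i j, i < m -> j < m -> f ∘ p i = f ∘ p j) /\
  forall (X : C) (x : nat -> Hom X A),
    (forall i j, i < m -> j < m -> f ∘ x i = f ∘ x j) ->
    exists u : Hom X P, (forall i, i < m -> p i ∘ u = x i) /\
      forall v : Hom X P, (forall i, i < m -> p i ∘ v = x i) -> v = u.

Record TangentData (C : Category) := {
  T : C -> C;
  Tm : forall A B : C, Hom A B -> Hom (T A) (T B);
  tp : forall A : C, Hom (T A) A;
  tz : forall A : C, Hom A (T A);
  T2 : C -> C;
  T2p1 : forall A : C, Hom (T2 A) (T A);
  T2p2 : forall A : C, Hom (T2 A) (T A);
  tplus : forall A : C, Hom (T2 A) (T A);
  tlam : forall A : C, Hom (T A) (T (T A));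
  tc : forall A : C, Hom (T (T A)) (T (T A));
  tneg : forall A : C, Hom (T A) (T A)
}.
Arguments T {C} _ _.
Arguments Tm {C} _ {A B} _.
Arguments tp {C} _ _.
Arguments tz {C} _ _.
Arguments T2 {C} _ _.
Arguments T2p1 {C} _ _.
Arguments T2p2 {C} _ _.
Arguments tplus {C} _ _.
Arguments tlam {C} _ _.
Arguments tc {C} _ _.
Arguments tneg {C} _ _.

Fixpoint Tn {C : Category} (TD : TangentData C) (n : nat) (A : C) : C :=
  match n with 0 => A | S k => Tn TD k (T TD A) end.

Fixpoint Tnm {C : Category} (TD : TangentData C) (n : nat) :
    forall A B : C, Hom A B -> Hom (Tn TD n A) (Tn TD n B) :=
  match n with
  | 0 => fun A B f => f
  | S k => fun A B f => Tnm TD k (T TD A) (T TD B) (Tm TD f)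
  end.
Arguments Tnm {C} TD n {A B} _.

Fixpoint zn {C : Category} (TD : TangentData C) (n : nat) (A : C) :
    Hom A (Tn TD n A) :=
  match n with
  | 0 => idm A
  | S k => Tnm TD k (tz TD A) ∘ zn TD k A
  end.

Definition is_sum {C : Category} (TD : TangentData C) {A X : C}
    (a b c : Hom X (T TD A)) : Prop :=
  exists u : Hom X (T2 TD A),
    T2p1 TD A ∘ u = a /\ T2p2 TD A ∘ u = b /\ c = tplus TD A ∘ u.

Record is_tangent {C : Category} (TD : TangentData C) : Prop := {
  T_id : forall A : C, Tm TD (idm A) = idm (T TD A);
  T_comp : forall (A B D : C) (g : Hom B D) (f : Hom A B),
      Tm TD (g ∘ f) = Tm TD g ∘ Tm TD f;
  tp_nat : forall (A B : C) (f : Hom A B), tp TD B ∘ Tm TD f = f ∘ tp TD A;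
  tz_nat : forall (A B : C) (f : Hom A B), Tm TD f ∘ tz TD A = tz TD B ∘ f;
  tplus_nat : forall (A B : C) (f : Hom A B) (u : Hom (T2 TD A) (T2 TD B)),
      T2p1 TD B ∘ u = Tm TD f ∘ T2p1 TD A ->
      T2p2 TD B ∘ u = Tm TD f ∘ T2p2 TD A ->
      tplus TD B ∘ u = Tm TD f ∘ tplus TD A;
  tlam_nat : forall (A B : C) (f : Hom A B),
      tlam TD B ∘ Tm TD f = Tm TD (Tm TD f) ∘ tlam TD A;
  tc_nat : forall (A B : C) (f : Hom A B),
      tc TD B ∘ Tm TD (Tm TD f) = Tm TD (Tm TD f) ∘ tc TD A;
  tneg_nat : forall (A B : C) (f : Hom A B),
      tneg TD B ∘ Tm TD f = Tm TD f ∘ tneg TD A;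
  T2_pullback : forall A : C, is_pullback (T2p1 TD A) (T2p2 TD A) (tp TD A) (tp TD A);
  Tm_exist : forall (m : nat) (A : C), 1 <= m ->
      exists (P : C) (p : nat -> Hom P (T TD A)), is_fiber_power m p (tp TD A);
  Tm_preserved : forall (n m : nat) (A P : C) (p : nat -> Hom P (T TD A)),
      1 <= m -> is_fiber_power m p (tp TD A) ->
      is_fiber_power m (fun i => Tnm TD n (p i)) (Tnm TD n (tp TD A));
  tp_tz : forall A : C, tp TD A ∘ tz TD A = idm A;
  tp_tplus : forall A : C, tp TD A ∘ tplus TD A = tp TD A ∘ T2p1 TD A;
  tplus_assoc : forall (A X : C) (a b c ab bc x y : Hom X (T TD A)),
      is_sum TD a b ab -> is_sum TD ab c x ->
      is_sum TD b c bc -> is_sum TD a bc y -> x = y;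
  tplus_unit : forall (A X : C) (a : Hom X (T TD A)) (u : Hom X (T2 TD A)),
      T2p1 TD A ∘ u = a -> T2p2 TD A ∘ u = tz TD A ∘ tp TD A ∘ a ->
      tplus TD A ∘ u = a;
  tplus_comm : forall (A X : C) (a b c : Hom X (T TD A)),
      is_sum TD a b c -> is_sum TD b a c;
  tp_tneg : forall A : C, tp TD A ∘ tneg TD A = tp TD A;
  tneg_inv : forall (A : C) (u : Hom (T TD A) (T2 TD A)),
      T2p1 TD A ∘ u = idm (T TD A) -> T2p2 TD A ∘ u = tneg TD A ->
      tplus TD A ∘ u = tz TD A ∘ tp TD A;
  tlam_tp : forall A : C, Tm TD (tp TD A) ∘ tlam TD A = tz TD A ∘ tp TD A;
  tlam_tz : forall A : C, tlam TD A ∘ tz TD A = Tm TD (tz TD A) ∘ tz TD A;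
  tlam_tplus : forall (A : C) (w : Hom (T2 TD A) (T TD (T2 TD A))),
      Tm TD (T2p1 TD A) ∘ w = tlam TD A ∘ T2p1 TD A ->
      Tm TD (T2p2 TD A) ∘ w = tlam TD A ∘ T2p2 TD A ->
      tlam TD A ∘ tplus TD A = Tm TD (tplus TD A) ∘ w;
  tc_tp : forall A : C, tp TD (T TD A) ∘ tc TD A = Tm TD (tp TD A);
  tc_tz : forall A : C, tc TD A ∘ Tm TD (tz TD A) = tz TD (T TD A);
  tc_tplus : forall (A : C) (u : Hom (T TD (T2 TD A)) (T2 TD (T TD A))),
      T2p1 TD (T TD A) ∘ u = tc TD A ∘ Tm TD (T2p1 TD A) ->
      T2p2 TD (T TD A) ∘ u = tc TD A ∘ Tm TD (T2p2 TD A) ->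
      tc TD A ∘ Tm TD (tplus TD A) = tplus TD (T TD A) ∘ u;
  tc_invol : forall A : C, tc TD A ∘ tc TD A = idm (T TD (T TD A));
  tc_tlam : forall A : C, tc TD A ∘ tlam TD A = tlam TD A;
  tlam_tlam : forall A : C,
      Tm TD (tlam TD A) ∘ tlam TD A = tlam TD (T TD A) ∘ tlam TD A;
  tc_yb : forall A : C,
      tc TD (T TD A) ∘ Tm TD (tc TD A) ∘ tc TD (T TD A)
      = Tm TD (tc TD A) ∘ tc TD (T TD A) ∘ Tm TD (tc TD A);
  tc_tlam_coh : forall A : C,
      Tm TD (tc TD A) ∘ tc TD (T TD A) ∘ Tm TD (tlam TD A)
      = tlam TD (T TD A) ∘ tc TD A;
  (* universality of the vertical lift: with mu = T(+) o <lambda pr1, 0_T pr2>,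
     the square  T_2 A --mu--> T^2 A, T_2 A --pi pr1--> A, T pi, 0
     is a pullback, preserved by every T^n *)
  tlam_universal : forall (A : C) (v : Hom (T2 TD A) (T TD (T2 TD A))),
      Tm TD (T2p1 TD A) ∘ v = tlam TD A ∘ T2p1 TD A ->
      Tm TD (T2p2 TD A) ∘ v = tz TD (T TD A) ∘ T2p2 TD A ->
      forall n : nat,
        is_pullback (Tnm TD n (Tm TD (tplus TD A) ∘ v))
                    (Tnm TD n (tp TD A ∘ T2p1 TD A))
                    (Tnm TD n (Tm TD (tp TD A))) (Tnm TD n (tz TD A))
}.

(* G_0 = G0, G_1 = G1, G_(k+2) = Gss k := G1 x_{s, t_(k+1)} G_(k+1) *)
Definition Gk_of {C : Category} (G0 G1 : C) (Gss : nat -> C) (k : nat) : C :=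
  match k with 0 => G0 | 1 => G1 | S (S j) => Gss j end.

Record GroupoidData (C : Category) := {
  G0 : C;
  G1 : C;
  gs : Hom G1 G0;
  gt : Hom G1 G0;
  ge : Hom G0 G1;
  ginv : Hom G1 G1;
  Gss : nat -> C;
  prA : forall k, Hom (Gss k) G1;
  prB : forall k, Hom (Gss k) (Gk_of G0 G1 Gss (S k));
  gm : Hom (Gss 0) G1
}.
Arguments G0 {C} _.
Arguments G1 {C} _.
Arguments gs {C} _.
Arguments gt {C} _.
Arguments ge {C} _.
Arguments ginv {C} _.
Arguments Gss {C} _ _.
Arguments prA {C} _ _.
Arguments prB {C} _ _.
Arguments gm {C} _.

Definition Gk {C : Category} (G : GroupoidData C) (k : nat) : C :=
  Gk_of (G0 G) (G1 G) (Gss G) k.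

Definition tk {C : Category} (G : GroupoidData C) (k : nat) : Hom (Gk G k) (G0 G) :=
  match k as k0 return Hom (Gk G k0) (G0 G) with
  | 0 => idm (G0 G)
  | 1 => gt G
  | S (S j) => gt G ∘ prA G j
  end.

Definition is_mul {C : Category} (G : GroupoidData C) {X : C}
    (a b c : Hom X (G1 G)) : Prop :=
  exists w : Hom X (Gss G 0), prA G 0 ∘ w = a /\ prB G 0 ∘ w = b /\ c = gm G ∘ w.

Record is_groupoid {C : Category} (G : GroupoidData C) : Prop := {
  G_pullbacks : forall k : nat,
      is_pullback (prA G k) (prB G k) (gs G) (tk G (S k));
  gs_ge : gs G ∘ ge G = idm (G0 G);
  gt_ge : gt G ∘ ge G = idm (G0 G);
  gs_gm : gs G ∘ gm G = gs G ∘ prB G 0;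
  gt_gm : gt G ∘ gm G = gt G ∘ prA G 0;
  gm_assoc : forall (X : C) (a b c ab bc x y : Hom X (G1 G)),
      is_mul G a b ab -> is_mul G ab c x ->
      is_mul G b c bc -> is_mul G a bc y -> x = y;
  gm_unit_r : forall (X : C) (a : Hom X (G1 G)) (w : Hom X (Gss G 0)),
      prA G 0 ∘ w = a -> prB G 0 ∘ w = ge G ∘ gs G ∘ a -> gm G ∘ w = a;
  gm_unit_l : forall (X : C) (a : Hom X (G1 G)) (w : Hom X (Gss G 0)),
      prA G 0 ∘ w = ge G ∘ gt G ∘ a -> prB G 0 ∘ w = a -> gm G ∘ w = a;
  gs_ginv : gs G ∘ ginv G = gt G;
  gt_ginv : gt G ∘ ginv G = gs G;
  gm_inv_r : forall (X : C) (a : Hom X (G1 G)) (w : Hom X (Gss G 0)),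
      prA G 0 ∘ w = a -> prB G 0 ∘ w = ginv G ∘ a -> gm G ∘ w = ge G ∘ gt G ∘ a;
  gm_inv_l : forall (X : C) (a : Hom X (G1 G)) (w : Hom X (Gss G 0)),
      prA G 0 ∘ w = ginv G ∘ a -> prB G 0 ∘ w = a -> gm G ∘ w = ge G ∘ gs G ∘ a
}.

(* Differentiability (for an object M over G0 via q : M -> G0; used with
   M = G1, q = s for the groupoid and M = E, q = r for bundles)       *)
Definition differentiable_over {C : Category} (TD : TangentData C)
    (G : GroupoidData C) {M : C} (q : Hom M (G0 G)) : Prop :=
  forall (n m k : nat), 1 <= n -> 2 <= m ->
    has_pullback (Tnm TD n q) (Tnm TD n (tk G k)) /\
    has_pullback (Tnm TD n q) (zn TD n (G0 G) ∘ tk G k) /\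
    (forall (P Q : C) (p : nat -> Hom P (T TD M)) (pq : nat -> Hom Q (T TD (G0 G)))
            (Tmq : Hom P Q) (z0 : Hom (G0 G) Q),
        is_fiber_power m p (tp TD M) -> is_fiber_power m pq (tp TD (G0 G)) ->
        (forall i, i < m -> pq i ∘ Tmq = Tm TD q ∘ p i) ->
        (forall i, i < m -> pq i ∘ z0 = tz TD (G0 G)) ->
        has_pullback Tmq (z0 ∘ tk G k)) /\
    (forall (P : C) (p1 : Hom P M) (p2 : Hom P (Gk G k)),
        is_pullback p1 p2 q (tk G k) ->
        forall (Q : C) (q1 : Hom Q (Tn TD n M)) (q2 : Hom Q (Tn TD n (Gk G k))),
        is_pullback q1 q2 (Tnm TD n q) (Tnm TD n (tk G k)) ->
        forall nu : Hom (Tn TD n P) Q,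
        q1 ∘ nu = Tnm TD n p1 -> q2 ∘ nu = Tnm TD n p2 -> is_iso nu).

Definition differentiable_groupoid {C : Category} (TD : TangentData C)
    (G : GroupoidData C) : Prop :=
  differentiable_over TD G (gs G) /\
  (forall (P : C) (p1 : Hom P (T TD (G1 G))) (p2 : Hom P (G0 G)),
      is_pullback p1 p2 (Tm TD (gs G)) (tz TD (G0 G)) ->
      has_pullback (ge G) (tp TD (G1 G) ∘ p1)).

Definition is_act {C : Category} {E EG X : C} (pE : Hom EG E) {G1' : C}
    (pG : Hom EG G1') (b : Hom EG E) (x : Hom X E) (g : Hom X G1') (y : Hom X E) : Prop :=
  exists w : Hom X EG, pE ∘ w = x /\ pG ∘ w = g /\ y = b ∘ w.

(* r : E -> G0 with action b : E x_{r,t} G1 -> E, where (EG, pE, pG) is the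
   (chosen) pullback E x_{r,t} G1 *)
Definition is_right_bundle {C : Category} (G : GroupoidData C) {E EG : C}
    (r : Hom E (G0 G)) (pE : Hom EG E) (pG : Hom EG (G1 G)) (b : Hom EG E) : Prop :=
  is_pullback pE pG r (gt G) /\
  (forall k : nat, has_pullback r (tk G k)) /\
  r ∘ b = gs G ∘ pG /\
  (forall (X : C) (x : Hom X E) (w : Hom X EG),
      pE ∘ w = x -> pG ∘ w = ge G ∘ r ∘ x -> b ∘ w = x) /\
  (forall (X : C) (x y z z' : Hom X E) (g h gh : Hom X (G1 G)),
      is_act pE pG b x g y -> is_act pE pG b y h z ->
      is_mul G g h gh -> is_act pE pG b x gh z' -> z = z').

Definition differentiable_bundle {C : Category} (TD : TangentData C)
    (G : GroupoidData C) {E : C} (r : Hom E (G0 G)) : Prop :=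
  differentiable_groupoid TD G /\ differentiable_over TD G r.

(* Main.v *)
Require Import Defs.
From Stdlib Require Import Arith Lia.

Section Aux.
Context {C : Category}.

Lemma pb_ext {A B D P X : C} (p1 : Hom P A) (p2 : Hom P B) (f : Hom A D) (g : Hom B D)
  (H : is_pullback p1 p2 f g) (u v : Hom X P) :
  p1 ∘ u = p1 ∘ v -> p2 ∘ u = p2 ∘ v -> u = v.
Proof.
  intros e1 e2. destruct H as [Hc Hu].
  assert (f ∘ (p1 ∘ v) = g ∘ (p2 ∘ v)) as E by (rewrite !comp_assoc, Hc; reflexivity).
  destruct (Hu X _ _ E) as [m [m1 [m2 m3]]].
  rewrite (m3 u e1 e2), (m3 v eq_refl eq_refl). reflexivity.
Qed.

Lemma pb_paste {A B D K P V : C} (f : Hom A D) (g : Hom B D) (h : Hom K B)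
  (iV : Hom V A) (rV : Hom V B) (HV : is_pullback iV rV f g)
  (P1 : Hom P A) (P2 : Hom P K) (HP : is_pullback P1 P2 f (g ∘ h)) :
  has_pullback rV h.
Proof.
  destruct HP as [Pc Pu]. destruct HV as [Vc Vu].
  destruct (Vu P P1 (h ∘ P2)) as [u [u1 [u2 _]]]. { rewrite Pc, comp_assoc. reflexivity. }
  exists P, u, P2. split; [exact u2|].
  intros X x1 x2 E.
  assert (f ∘ (iV ∘ x1) = (g ∘ h) ∘ x2) as E2.
  { rewrite comp_assoc, Vc, <- comp_assoc, E, comp_assoc. reflexivity. }
  destruct (Pu X _ _ E2) as [v [v1 [v2 v3]]].
  exists v. split; [|split; [exact v2|]].
  - apply (pb_ext iV rV f g (conj Vc Vu)).
    + rewrite comp_assoc, u1. exact v1.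
    + rewrite comp_assoc, u2, <- comp_assoc, v2. symmetry; exact E.
  - intros v' e1 e2. apply v3; [|exact e2].
    rewrite <- u1, <- comp_assoc, e1. reflexivity.
Qed.

Variable TD : TangentData C.
Hypothesis HT : is_tangent TD.

Lemma Tnm_comp n : forall A B D (g : Hom B D) (f : Hom A B),
  Tnm TD n (g ∘ f) = Tnm TD n g ∘ Tnm TD n f.
Proof.
  induction n; intros; simpl; [reflexivity|].
  rewrite (T_comp _ HT). apply IHn.
Qed.

Lemma Tnm_id n : forall A, Tnm TD n (idm A) = idm (Tn TD n A).
Proof.
  induction n; intros; simpl; [reflexivity|].
  rewrite (T_id _ HT). apply IHn.
Qed.

Lemma zn_nat n : forall A B (f : Hom A B),
  Tnm TD n f ∘ zn TD n A = zn TD n B ∘ f.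
Proof.
  induction n; intros; simpl.
  - rewrite comp_idl, comp_idr. reflexivity.
  - rewrite comp_assoc, <- Tnm_comp, (tz_nat _ HT), Tnm_comp, <- comp_assoc, IHn,
      comp_assoc. reflexivity.
Qed.

End Aux.

Theorem mainTheorem8 (C : Category) (TD : TangentData C) (HT : is_tangent TD)
  (G : GroupoidData C) (HG : is_groupoid G)
  (E : C) (r : Hom E (G0 G))
  (EG : C) (pE : Hom EG E) (pG : Hom EG (G1 G)) (bE : Hom EG E)
  (HE : is_right_bundle G r pE pG bE)
  (Hdiff : differentiable_bundle TD G r)
  (n : nat)
  (V : C) (iV : Hom V (Tn TD n E)) (rV : Hom V (G0 G))
  (HV : is_pullback iV rV (Tnm TD n r) (zn TD n (G0 G)))
  (Q : C) (q1 : Hom Q (Tn TD n E)) (q2 : Hom Q (Tn TD n (G1 G)))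
  (HQ : is_pullback q1 q2 (Tnm TD n r) (Tnm TD n (gt G)))
  (nu : Hom (Tn TD n EG) Q)
  (Hnu1 : q1 ∘ nu = Tnm TD n pE) (Hnu2 : q2 ∘ nu = Tnm TD n pG)
  (bT : Hom Q (Tn TD n E)) (HbT : bT ∘ nu = Tnm TD n bE)
  (VG : C) (pV : Hom VG V) (pVG : Hom VG (G1 G))
  (HVG : is_pullback pV pVG rV (gt G))
  (w : Hom VG Q) (Hw1 : q1 ∘ w = iV ∘ pV) (Hw2 : q2 ∘ w = zn TD n (G1 G) ∘ pVG)
  (bV : Hom VG V) (HbV1 : iV ∘ bV = bT ∘ w) (HbV2 : rV ∘ bV = gs G ∘ pVG) :
  is_right_bundle G rV pV pVG bV.
Proof.
  destruct HE as [HEpb [HEk [HErb [HEu HEa]]]].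
  destruct Hdiff as [_ Hr].
  pose proof (Tnm_comp TD HT n) as TC.
  pose proof (zn_nat TD HT n) as ZN.
  split; [exact HVG|]. split; [|split; [exact HbV2|split]].
  -
    intro k.
    assert (has_pullback (Tnm TD n r) (zn TD n (G0 G) ∘ tk G k)) as [P [P1 [P2 HP]]].
    { destruct n as [|n'].
      - simpl. rewrite comp_idl. apply HEk.
      - destruct (Hr (S n') 2 k ltac:(lia) ltac:(lia)) as [_ [H2 _]]. exact H2. }
    exact (pb_paste _ _ _ iV rV HV P1 P2 HP).
  -
    intros X x w' e1 e2.
    destruct (proj2 HEpb E (idm E) (ge G ∘ r)) as [s [s1 [s2 _]]].
    { rewrite comp_idr, comp_assoc, (gt_ge _ HG), comp_idl. reflexivity. }
    assert (bE ∘ s = idm E) as Hs by (apply (HEu E (idm E) s s1); rewrite s2, comp_idr; reflexivity).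
    assert (w ∘ w' = nu ∘ Tnm TD n s ∘ iV ∘ x) as Hy.
    { apply (pb_ext q1 q2 _ _ HQ).
      - rewrite !comp_assoc, Hw1, Hnu1, <- TC, s1, <- comp_assoc, e1.
        rewrite Tnm_id, comp_idl by exact HT. reflexivity.
      - rewrite !comp_assoc, Hw2, Hnu2, <- TC, s2, TC, <- comp_assoc, e2.
        rewrite <- (comp_assoc _ _ _ _ _ (Tnm TD n (ge G))), (proj1 HV).
        rewrite !comp_assoc, ZN. reflexivity. }
    apply (pb_ext iV rV _ _ HV).
    + rewrite comp_assoc, HbV1, <- comp_assoc, Hy, !comp_assoc, HbT, <- TC, Hs, Tnm_id, comp_idl by exact HT.
      rewrite <- e1, comp_assoc. reflexivity.
    + rewrite comp_assoc, HbV2, <- comp_assoc, e2, !comp_assoc, (gs_ge _ HG), comp_idl.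
      reflexivity.
  -
    intros X x y z z' g h gh [w1 [a1 [a2 a3]]] [w2 [b1 [b2 b3]]] [p [c1 [c2 c3]]]
      [w3 [d1 [d2 d3]]].
    subst y z z'.
    (* generic element *)
    destruct (HEk 2) as [P2 [p1 [p2 HP2]]].
    change (Gk G 2) with (Gss G 0) in *.
    assert (HP2c : r ∘ p1 = gt G ∘ (prA G 0 ∘ p2)).
    { rewrite comp_assoc. exact (proj1 HP2). }
    destruct (proj2 HEpb P2 p1 (prA G 0 ∘ p2) HP2c) as [A1 [A11 [A12 _]]].
    assert (HA2c : r ∘ (bE ∘ A1) = gt G ∘ (prB G 0 ∘ p2)).
    { rewrite comp_assoc, HErb, <- comp_assoc, A12, comp_assoc,
        (proj1 (G_pullbacks _ HG 0)), <- comp_assoc. reflexivity. }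
    destruct (proj2 HEpb P2 _ _ HA2c) as [A2 [A21 [A22 _]]].
    assert (HA3c : r ∘ p1 = gt G ∘ (gm G ∘ p2)).
    { rewrite comp_assoc, (gt_gm _ HG), <- comp_assoc. exact HP2c. }
    destruct (proj2 HEpb P2 _ _ HA3c) as [A3 [A31 [A32 _]]].
    assert (Hassoc : bE ∘ A2 = bE ∘ A3).
    { apply (HEa P2 p1 (bE ∘ A1) (bE ∘ A2) (bE ∘ A3) (prA G 0 ∘ p2) (prB G 0 ∘ p2)
        (gm G ∘ p2)).
      - exists A1. auto.
      - exists A2. auto.
      - exists p2. auto.
      - exists A3. auto. }
    (* lift to T^n *)
    assert (exists (Q2 : C) (r1 : Hom Q2 (Tn TD n E)) (r2 : Hom Q2 (Tn TD n (Gss G 0)))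
              (nu2 : Hom (Tn TD n P2) Q2),
              is_pullback r1 r2 (Tnm TD n r) (Tnm TD n (gt G ∘ prA G 0)) /\
              r1 ∘ nu2 = Tnm TD n p1 /\ r2 ∘ nu2 = Tnm TD n p2 /\ is_iso nu2)
      as [Q2 [r1 [r2 [nu2 [HQ2 [n1 [n2 Hiso]]]]]]].
    { destruct n as [|n'].
      - exists P2, p1, p2, (idm P2). simpl. rewrite !comp_idr. split; [exact HP2|]. split; [reflexivity|]. split; [reflexivity|].
        exists (idm P2). rewrite comp_idl. auto.
      - destruct (Hr (S n') 2 2 ltac:(lia) ltac:(lia)) as [H1 [_ [_ H4]]].
        destruct H1 as [Q2 [r1 [r2 HQ2]]].
        destruct (proj2 HQ2 _ (Tnm TD (S n') p1) (Tnm TD (S n') p2)) as [nu2 [n1 [n2 _]]].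
        { rewrite <- !TC. f_equal. exact (proj1 HP2). }
        exists Q2, r1, r2, nu2. split; [exact HQ2|]. split; [exact n1|]. split; [exact n2|].
        exact (H4 P2 p1 p2 HP2 Q2 r1 r2 HQ2 nu2 n1 n2). }
    destruct Hiso as [nu2i [Hi1 Hi2]].
    assert (He : Tnm TD n r ∘ (iV ∘ x) = Tnm TD n (gt G ∘ prA G 0) ∘ (zn TD n (Gss G 0) ∘ p)).
    { assert (Hrx : rV ∘ x = gt G ∘ g).
      { rewrite <- a1, comp_assoc, (proj1 HVG), <- comp_assoc, a2. reflexivity. }
      rewrite comp_assoc, (proj1 HV), <- comp_assoc, Hrx, TC, <- comp_assoc.
      rewrite !comp_assoc, <- TC, ZN, <- !comp_assoc, c1. reflexivity. }
    destruct (proj2 HQ2 X _ _ He) as [e [e1 [e2 _]]].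
    set (E' := nu2i ∘ e).
    assert (HE1 : Tnm TD n p1 ∘ E' = iV ∘ x).
    { unfold E'. rewrite <- n1, <- comp_assoc, (comp_assoc _ _ _ _ _ nu2), Hi2, comp_idl. exact e1. }
    assert (HE2 : Tnm TD n p2 ∘ E' = zn TD n (Gss G 0) ∘ p).
    { unfold E'. rewrite <- n2, <- comp_assoc, (comp_assoc _ _ _ _ _ nu2), Hi2, comp_idl. exact e2. }
    assert (K1 : w ∘ w1 = nu ∘ Tnm TD n A1 ∘ E').
    { apply (pb_ext q1 q2 _ _ HQ).
      - rewrite !comp_assoc, Hw1, Hnu1, <- TC, A11, <- !comp_assoc, a1, HE1. reflexivity.
      - rewrite !comp_assoc, Hw2, Hnu2, <- TC, A12, TC, <- !comp_assoc, HE2, a2, <- c1,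
          !comp_assoc, ZN. reflexivity. }
    assert (K2 : w ∘ w2 = nu ∘ Tnm TD n A2 ∘ E').
    { apply (pb_ext q1 q2 _ _ HQ).
      - rewrite !comp_assoc, Hw1, Hnu1, <- TC, A21, <- !comp_assoc, b1.
        rewrite comp_assoc, HbV1, <- comp_assoc, K1, !comp_assoc, HbT, <- TC. reflexivity.
      - rewrite !comp_assoc, Hw2, Hnu2, <- TC, A22, TC, <- !comp_assoc, HE2, b2, <- c2,
          !comp_assoc, ZN. reflexivity. }
    assert (K3 : w ∘ w3 = nu ∘ Tnm TD n A3 ∘ E').
    { apply (pb_ext q1 q2 _ _ HQ).
      - rewrite !comp_assoc, Hw1, Hnu1, <- TC, A31, <- !comp_assoc, d1, HE1. reflexivity.
      - rewrite !comp_assoc, Hw2, Hnu2, <- TC, A32, TC, <- !comp_assoc, HE2, d2, c3,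
          !comp_assoc, ZN. reflexivity. }
    apply (pb_ext iV rV _ _ HV).
    + rewrite !comp_assoc, !HbV1, <- !comp_assoc, K2, K3, !comp_assoc, HbT, <- !TC, Hassoc.
      reflexivity.
    + rewrite !comp_assoc, !HbV2, <- !comp_assoc, b2, d2, c3, comp_assoc,
        (gs_gm _ HG), <- comp_assoc, <- c2. reflexivity.
Qed.
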